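(* For any connected graphs $G$ and $H$, $v_s(G)\,v_s(H) \le \gamma_P(G \Box H)$. In addition, if $\gamma_P(G) = v_s(G)$ and $\gamma_P(H) = v_s(H)$, then $\gamma_P(G)\gamma_P(H) \le \gamma_P(G \Box H)$.
   Context: A strong support vertex of a graph is a vertex adjacent to at least two leaves (vertices of degree $1$); $v_s(G)$ denotes the number of strong support vertices of $G$. For $S \subseteq V(G)$: initially all vertices of $S$ and their neighbors are observed; then, repeatedly, any vertex that is the only unobserved neighbor of some observed vertex becomes observed. $S$ is a power dominating set if eventually all vertices are observed; $\gamma_P(G)$ is the minimum size of a power dominating set. $G\Box H$ denotes the Cartesian product: vertex set $V(G)\times V(H)$, with $(g_1,h_1)\sim(g_2,h_2)$ iff ($g_1=g_2$ and $h_1h_2\in E(H)$) or ($h_1=h_2$ and $g_1g_2\in E(G)$). *)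

(* Defs.v *)
From mathcomp Require Import all_boot.
Set Implicit Arguments. Unset Strict Implicit. Unset Printing Implicit Defensive.

Definition simple_graph (T : finType) (e : rel T) : Prop :=
  symmetric e /\ irreflexive e.

Definition connected_graph (T : finType) (e : rel T) : Prop :=
  forall x y : T, connect e x y.

Definition nbhd (T : finType) (e : rel T) (v : T) : {set T} := [set u | e v u].
Definition deg (T : finType) (e : rel T) (v : T) : nat := #|nbhd e v|.
Definition leaf (T : finType) (e : rel T) (v : T) : bool := deg e v == 1.

Definition strong_support (T : finType) (e : rel T) (v : T) : bool :=
  2 <= #|[set u | e v u & leaf e u]|.

Definition v_s (T : finType) (e : rel T) : nat := #|[set v | strong_support e v]|.

Definition closed_nbhd (T : finType) (e : rel T) (S : {set T}) : {set T} :=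
  S :|: [set v | [exists u in S, e u v]].

(* X is stable under the propagation rule: no observed vertex has exactly one
   unobserved neighbour *)
Definition prop_closed (T : finType) (e : rel T) (X : {set T}) : bool :=
  [forall u in X, #|[set w | e u w & w \notin X]| != 1].

(* The set finally observed from S is the least set containing N[S] and
   closed under propagation; S is power dominating iff this set is all of T. *)
Definition power_dominating (T : finType) (e : rel T) (S : {set T}) : bool :=
  [forall X : {set T},
     (closed_nbhd e S \subset X) && prop_closed e X ==> (X == setT)].

(* power domination number (setT is always power dominating, so the minimum
   is attained; #|T| is a harmless upper default) *)
Definition gammaP (T : finType) (e : rel T) : nat :=
  \big[minn/#|T|]_(S : {set T} | power_dominating e S) #|S|.

Definition cart_prod (T1 T2 : finType) (e1 : rel T1) (e2 : rel T2) : rel (T1 * T2) :=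
  fun x y => ((x.1 == y.1) && e2 x.2 y.2) || ((x.2 == y.2) && e1 x.1 y.1).

(* Main.v *)
Require Import Defs.
From mathcomp Require Import all_boot.
Set Implicit Arguments. Unset Strict Implicit. Unset Printing Implicit Defensive.

Lemma leaf_uniq (T : finType) (e : rel T) m a b :
  leaf e m -> e m a -> e m b -> a = b.
Proof.
rewrite /leaf /deg => /cards1P [z Hz] ha hb.
have : a \in nbhd e m by rewrite inE.
have : b \in nbhd e m by rewrite inE.
by rewrite Hz !inE => /eqP -> /eqP ->.
Qed.

Definition Lv (T : finType) (e : rel T) g := locked [set u | e g u & leaf e u].
Lemma LvE (T : finType) (e : rel T) g : Lv e g = [set u | e g u & leaf e u].
Proof. by rewrite /Lv -lock. Qed.

Lemma key (T1 T2 : finType) (e1 : rel T1) (e2 : rel T2) (S : {set T1 * T2}) g h :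
  symmetric e1 -> symmetric e2 -> strong_support e1 g -> strong_support e2 h ->
  power_dominating (cart_prod e1 e2) S ->
  exists2 x, x \in S & (x.1 \in g |: Lv e1 g) && (x.2 \in h |: Lv e2 h).
Proof.
move=> s1 s2 sg sh pd.
case: (boolP [exists x in S, (x.1 \in g |: Lv e1 g) && (x.2 \in h |: Lv e2 h)]).
  by move/exists_inP.
rewrite negb_exists_in => /forall_inP HS.
have sgL : 1 < #|Lv e1 g| by rewrite LvE.
have shL : 1 < #|Lv e2 h| by rewrite LvE.
have [l lL] : exists l, l \in Lv e1 g by apply/card_gt0P; exact: ltnW sgL.
have [m mL] : exists m, m \in Lv e2 h by apply/card_gt0P; exact: ltnW shL.
move/forallP: pd => /(_ (~: setX (Lv e1 g) (Lv e2 h))) /implyP.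
have Hl : forall x, x \in Lv e1 g -> e1 x g /\ leaf e1 x.
  by move=> x; rewrite LvE inE => /andP [a b]; rewrite s1.
have Hm : forall x, x \in Lv e2 h -> e2 x h /\ leaf e2 x.
  by move=> x; rewrite LvE inE => /andP [a b]; rewrite s2.
move=> H.
suff /H/eqP E : (closed_nbhd (cart_prod e1 e2) S \subset ~: setX (Lv e1 g) (Lv e2 h)) &&
   prop_closed (cart_prod e1 e2) (~: setX (Lv e1 g) (Lv e2 h)).
  have : (l,m) \in ~: setX (Lv e1 g) (Lv e2 h) by rewrite E inE.
  by rewrite !inE /= lL mL.
apply/andP; split.
- apply/subsetP => [[x y]]; rewrite /closed_nbhd !inE => /orP [xyS | /existsP [[u v] /andP [uvS uv]]].
  + apply/negP => /andP [xL yL]. have := HS _ xyS. by rewrite /= !inE xL yL !orbT.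
  + apply/negP => /andP [xL yL]; move: uv; rewrite /cart_prod /= => /orP [/andP [/eqP ux vy] | /andP [/eqP vy ux]].
    * have [yh ly] := Hm _ yL.
      have vh : v = h by apply: (leaf_uniq ly); [rewrite s2 | ].
      have := HS _ uvS. by rewrite /= !inE ux xL vh eqxx !orbT.
    * have [xg lx] := Hl _ xL.
      have ug : u = g by apply: (leaf_uniq lx); [rewrite s1 | ].
      have := HS _ uvS. by rewrite /= !inE vy yL ug eqxx !orbT.
- apply/forallP => [[x y]]; apply/implyP => xyX; apply/negP => /eqP c1.
  have : 0 < #|[set w | cart_prod e1 e2 (x, y) w & w \notin ~: setX (Lv e1 g) (Lv e2 h)]| by rewrite c1.
  move/card_gt0P => [[a b]]; rewrite !inE /= negbK => /andP [adj /andP [aL bL]].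
  move: adj; rewrite /cart_prod /= => /orP [/andP [/eqP xa yb] | /andP [/eqP yb xa]].
  + have [bh lb] := Hm _ bL.
    have yh : y = h by apply: (leaf_uniq lb); [rewrite s2 | ].
    have : #|(pair x) @: Lv e2 h| <= 1.
      rewrite -c1; apply: subset_leq_card; apply/subsetP => w /imsetP [m' m'L ->].
      have [m'h _] := Hm _ m'L.
      by rewrite !inE /cart_prod /= negbK eqxx yh s2 m'h xa aL m'L.
    rewrite card_imset; last by move=> ?? [].
    by rewrite leqNgt shL.
  + have [ag la] := Hl _ aL.
    have xg : x = g by apply: (leaf_uniq la); [rewrite s1 | ].
    have : #|(fun z => (z, y)) @: Lv e1 g| <= 1.
      rewrite -c1; apply: subset_leq_card; apply/subsetP => w /imsetP [l' l'L ->].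
      have [l'g _] := Hl _ l'L.
      by rewrite !inE /cart_prod /= negbK eqxx xg s1 l'g yb bL l'L orbT.
    rewrite card_imset; last by move=> ?? [].
    by rewrite leqNgt sgL.
Qed.


Definition pj (T : finType) (e : rel T) x :=
  if strong_support e x then x else odflt x [pick y | e x y].

Lemma pj_ok (T : finType) (e : rel T) g x :
  symmetric e -> strong_support e g -> x \in g |: Lv e g -> pj e x = g.
Proof.
move=> s sg; rewrite in_setU1 => /orP [/eqP -> | ]; first by rewrite /pj sg.
rewrite LvE inE => /andP [gx lx].
have nss : strong_support e x = false.
  apply/negbTE; rewrite /strong_support -ltnNge.
  have : #|nbhd e x| = 1 by apply/eqP.
  move=> <-; rewrite ltnS; apply: subset_leq_card; apply/subsetP => u.
  by rewrite !inE => /andP [].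
rewrite /pj nss; case: pickP => [y xy | none] /=.
  by apply: (leaf_uniq lx) => //; rewrite s.
by have := none g; rewrite s gx.
Qed.

Lemma lower (T1 T2 : finType) (e1 : rel T1) (e2 : rel T2) (S : {set T1 * T2}) :
  symmetric e1 -> symmetric e2 ->
  power_dominating (cart_prod e1 e2) S -> v_s e1 * v_s e2 <= #|S|.
Proof.
move=> s1 s2 pd.
rewrite /v_s -cardsX.
apply: leq_trans (leq_imset_card (fun x => (pj e1 x.1, pj e2 x.2)) S).
apply: subset_leq_card; apply/subsetP => [[g h]]; rewrite in_setX !inE => /andP [sg sh].
have [x xS /andP [xg xh]] := key s1 s2 sg sh pd.
apply/imsetP; exists x => //.
by rewrite (pj_ok s1 sg xg) (pj_ok s2 sh xh).
Qed.

Theorem lemma3p5 (T1 T2 : finType) (e1 : rel T1) (e2 : rel T2) :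
  simple_graph e1 -> simple_graph e2 ->
  connected_graph e1 -> connected_graph e2 ->
  v_s e1 * v_s e2 <= gammaP (cart_prod e1 e2) /\
  (gammaP e1 = v_s e1 -> gammaP e2 = v_s e2 ->
   gammaP e1 * gammaP e2 <= gammaP (cart_prod e1 e2)).
Proof.
move=> [s1 _] [s2 _] _ _.
have H : v_s e1 * v_s e2 <= gammaP (cart_prod e1 e2).
  rewrite /gammaP; apply: (big_ind (fun n => v_s e1 * v_s e2 <= n)).
  - rewrite -cardsT; apply: lower => //.
    apply/forallP => X; apply/implyP => /andP [sub _].
    rewrite eqEsubset subsetT /=; apply: subset_trans sub.
    by rewrite /closed_nbhd subsetUl.
  - by move=> a b ha hb; rewrite leq_min ha hb.
  - by move=> S pd; apply: lower.
split => // -> ->; exact: H.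
Qed.
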